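(* Let $n$ be a positive integer and let $\lambda$ and $\mu$ be integer partitions of $n$. Then $\mathrm{pre}_2(\lambda) = \mathrm{pre}_2(\mu)$ if and only if $\lambda = \mu$.
   Context: An integer partition $\lambda = (\lambda_1, \dots, \lambda_\ell)$ of a positive integer $n$ is a weakly decreasing finite sequence of positive integers whose sum is $n$; the $\lambda_i$ are its parts and $\ell(\lambda)=\ell$ is its length. For a partition $\lambda = (\lambda_1,\dots,\lambda_\ell)$, $\mathrm{pre}_2(\lambda)$ denotes the partition whose multiset of parts is the multiset $\{\!\{\lambda_i\lambda_j : 1 \le i < j \le \ell\}\!\}$ (with multiplicities, arranged in weakly decreasing order); if $\ell < 2$ it is the empty partition. *)

(* Defs.v *)
From mathcomp Require Import all_boot.
Set Implicit Arguments. Unset Strict Implicit. Unset Printing Implicit Defensive.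

Definition is_partition (n : nat) (l : seq nat) : bool :=
  [&& sorted geq l, all (fun x => 0 < x) l & sumn l == n].

Definition pre2 (l : seq nat) : seq nat :=
  sort geq [seq nth 0 l ij.1 * nth 0 l ij.2 |
             ij <- [seq (i, j) | i <- iota 0 (size l), j <- iota 0 (size l)]
           & ij.1 < ij.2].

(* Main.v *)
Require Import Defs.
From mathcomp Require Import all_boot.
From mathcomp Require Import zify.

Definition P (l : seq nat) k := sumn [seq x ^ k | x <- l].

Lemma sq_sum (y : nat -> nat) n :
  2 * (\sum_(0 <= i < n) \sum_(0 <= j < n) (if i < j then y i * y j else 0))
  + \sum_(0 <= i < n) y i ^ 2 = (\sum_(0 <= i < n) y i) ^ 2.
Proof.
elim: n => [|n IH]; first by rewrite !big_geq.
under eq_bigr => i _ do rewrite big_nat_recr //=.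
rewrite big_split /= !big_nat_recr //=.
have -> : \sum_(0 <= j < n) (if n < j then y n * y j else 0) = 0.
  rewrite big1_seq //= => j; rewrite mem_index_iota => /andP [_ H].
  by rewrite ltnNge ltnW.
rewrite ltnn.
have -> : \sum_(0 <= i < n) (if i < n then y i * y n else 0)
         = (\sum_(0 <= i < n) y i) * y n.
  rewrite big_distrl /=; apply: eq_big_nat => i /andP [_ ->] //.
move: IH; set T := \sum_(0 <= i < n) _; set S := \sum_(0 <= i < n) y i.
set Q := \sum_(0 <= i < n) _.
rewrite sqrnD => IH. nia.
Qed.

Lemma P_nth l k : P l k = \sum_(0 <= i < size l) (nth 0 l i) ^ k.
Proof.
rewrite /P sumnE big_map -{1}(mkseq_nth 0 l) /mkseq big_map.
by rewrite /index_iota subn0.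
Qed.

Lemma sum_pre2 l k : 2 * P (pre2 l) k + P l (2 * k) = P l k ^ 2.
Proof.
have -> : P (pre2 l) k = \sum_(0 <= i < size l) \sum_(0 <= j < size l)
    (if i < j then (nth 0 l i) ^ k * (nth 0 l j) ^ k else 0).
  have hp (s : seq nat) : perm_eq (sort geq s) s by rewrite perm_sort perm_refl.
  rewrite /P /pre2 (perm_sumn (perm_map _ (hp _))).
  rewrite sumnE !big_map big_filter big_mkcond big_allpairs /index_iota subn0.
  by apply: eq_bigr => i _; apply: eq_bigr => j _ /=; rewrite expnMn.
rewrite !P_nth -(sq_sum (fun i => nth 0 l i ^ k)); congr (_ + _).
by apply: eq_bigr => i _; rewrite mulnC expnM.
Qed.

Lemma bern x s : x ^ s.+1 + s.+1 * x ^ s <= (x + 1) ^ s.+1.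
Proof.
elim: s => [|s IH]; first by rewrite expn1 expn0 muln1.
rewrite (expnS (x + 1)).
apply: leq_trans (leq_mul (leqnn (x + 1)) IH).
rewrite !expnS. nia.
Qed.

Lemma bound m A : 0 < A -> exists j, m * (A - 1) ^ (2 ^ j) < A ^ (2 ^ j).
Proof.
case: A => // [[|x]] _.
  by exists 0; rewrite expn1 muln0 exp1n.
exists (m * x.+1); set s := 2 ^ _.
have hs : m * x.+1 < s by apply: ltn_expl.
have [t ht] : exists t, s = t.+1 by exists s.-1; rewrite prednK // (leq_ltn_trans _ hs).
rewrite ht subn1 /= -ht.
have := bern x.+1 t; rewrite -ht addn1 => hb.
apply: leq_trans hb.
have hpos : 0 < x.+1 ^ t by rewrite expn_gt0.
rewrite {1}ht expnS mulnA.
apply: (leq_trans _ (leq_addl _ _)).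
by rewrite ltn_pmul2r.
Qed.

Lemma maxin (s : seq nat) : s != [::] -> exists A, A \in s /\ all (fun x => x <= A) s.
Proof.
elim: s => // a s IH _.
case: (eqVneq s [::]) => [->|ne].
  by exists a; rewrite mem_seq1 /= leqnn.
have [B [hB hall]] := IH ne.
case: (leqP a B) => h.
  by exists B; rewrite inE hB orbT /= h hall.
exists a; rewrite inE eqxx /= leqnn /=; split => //.
by apply/allP => x hx; rewrite (@leq_trans B) //; [exact: (allP hall x hx)|exact: ltnW].
Qed.

Lemma P_rem x l k : x \in l -> P l k = x ^ k + P (rem x l) k.
Proof. by move=> H; rewrite /P (perm_sumn (perm_map _ (perm_to_rem H))). Qed.

Lemma P_le A l k : all (fun x => x <= A) l -> P l k <= size l * A ^ k.
Proof.
elim: l => [|a l IH] //= /andP [ha hl].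
rewrite mulSn leq_add // ?IH //.
by move: ha {IH hl}; case: k => [|k] ha; rewrite ?expn0 // leq_exp2r.
Qed.

Lemma no_extra lam mu A : (forall j, P lam (2 ^ j) = P mu (2 ^ j)) ->
  A \in mu -> A \notin lam -> 0 < A -> all (fun x => x <= A) lam -> False.
Proof.
move=> HP hm hl hA hall.
have hall' : all (fun x => x <= A - 1) lam.
  apply/allP => x hx; have := allP hall x hx.
  have : x != A by apply: contraNneq hl => <-.
  lia.
have [j hj] := @bound (size lam) A hA.
have := @P_le (A - 1) lam (2 ^ j) hall'; rewrite HP (@P_rem A mu (2 ^ j) hm) => h.
have := leq_ltn_trans h hj; rewrite -[X in _ < X]addn0 ltn_add2l.
by [].
Qed.

Lemma powsum_perm N lam mu : size lam + size mu <= N ->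
  all (fun x => 0 < x) lam -> all (fun x => 0 < x) mu ->
  (forall j, P lam (2 ^ j) = P mu (2 ^ j)) -> perm_eq lam mu.
Proof.
elim: N lam mu => [|N IH] lam mu.
  by case: lam => //; case: mu.
move=> hs hl hm HP.
case: (eqVneq (lam ++ mu) [::]) => [|ne].
  by case: lam {hs hl HP} => //; case: mu {hm}.
have [A [hA hall]] := @maxin (lam ++ mu) ne.
rewrite all_cat in hall; case/andP: hall => hal ham.
have Apos : 0 < A.
  by move: hA; rewrite mem_cat => /orP [] h; [exact: (allP hl) | exact: (allP hm)].
case: (boolP (A \in lam)) => hinl; last first.
  exfalso; apply: (@no_extra lam mu A HP _ hinl Apos hal).
  by move: hA; rewrite mem_cat (negbTE hinl).
case: (boolP (A \in mu)) => hinm; last first.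
  exfalso; apply: (@no_extra mu lam A _ hinl hinm Apos ham).
  by move=> j; rewrite HP.
rewrite (perm_trans (perm_to_rem hinl)) //.
rewrite perm_sym (perm_trans (perm_to_rem hinm)) // perm_cons perm_sym.
apply: IH.
- have h1 : 0 < size lam by move: hinl; case: (lam).
  have h2 : 0 < size mu by move: hinm; case: (mu).
  rewrite !size_rem //; move: hs h1 h2; case: (size lam) => [|a] //; case: (size mu) => [|b] //= H _ _.
  lia.
- by apply/allP => x hx; apply: (allP hl); exact: (mem_rem hx).
- by apply/allP => x hx; apply: (allP hm); exact: (mem_rem hx).
- by move=> j; have := HP j; rewrite (@P_rem A lam (2 ^ j) hinl) (@P_rem A mu (2 ^ j) hinm) => /addnI.
Qed.

Theorem theorem1 (n : nat) (lam mu : seq nat) :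
  0 < n -> is_partition n lam -> is_partition n mu ->
  (pre2 lam = pre2 mu <-> lam = mu).
Proof.
move=> _ /and3P [sl pl /eqP nl] /and3P [sm pm /eqP nm].
split; last by move=> ->.
move=> H.
have HP : forall j, P lam (2 ^ j) = P mu (2 ^ j).
  elim=> [|j IH].
    rewrite /P expn0.
    have e (l : seq nat) : [seq x ^ 1 | x <- l] = l.
      by rewrite (eq_map (fun x => expn1 x)) map_id.
    by rewrite !e nl nm.
  have := sum_pre2 lam (2 ^ j); have := sum_pre2 mu (2 ^ j).
  rewrite H IH -expnS => <- /eqP; rewrite eqn_add2l => /eqP.
  by [].
apply: (sorted_eq (leT := geq)) => //.
- by move=> a b c h1 h2; exact: leq_trans h2 h1.
- by move=> a b /andP [h1 h2]; apply/eqP; rewrite eqn_leq; apply/andP; split.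
- exact: (@powsum_perm _ lam mu (leqnn _) pl pm HP).
Qed.
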